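(* Let $Q$ and $W$ satisfy the standing assumptions and $l\in\mathbb N_0$. Then $Q$ is simulated by $\hat Q^{I^l_0}$ w.r.t. $U\times Y$, i.e. there exists a simulation relation from $Q$ to $\hat Q^{I^l_0}$ w.r.t. $U\times Y$.
   Context: Strings and signals: $\diamond$ is a symbol not in any other set considered. For a set $A$ and $l\in\mathbb N_0$, $A^l$ is the set of strings of length $l$ over $A$, indexed $\zeta=\zeta(0)\cdots\zeta(l-1)$; $\lambda$ is the empty string and $\cdot$ denotes concatenation. For a map $w$ on $\mathbb Z$ (or a string) and integers $t_1\le t_2$, $w|_{[t_1,t_2]}=w(t_1)\cdots w(t_2)$ is the string of length $t_2-t_1+1$ (absolute time forgotten); if $t_2<t_1$ it is $\lambda$. State machines: a state machine is $Q=(X,U,Y,\delta,X_0)$ with $X_0\subseteq X$, $\delta\subseteq X\times U\times Y\times X$. Let $H_\delta(x)=\{y:\exists u,x'.\,(x,u,y,x')\in\delta\}$, $F_\delta(x,u)=\{x':\exists y\in H_\delta(x).\,(x,u,y,x')\in\delta\}$. The full behavior $\mathcal B_f(Q)$ is the set of $(\mu,\nu,\xi)\in(U\times Y\times X)^{\mathbb N_0}$ with $\xi(0)\in X_0$ and $(\xi(k),\mu(k),\nu(k),\xi(k+1))\in\delta$ for all $k\in\mathbb N_0$. $Q$ is live and reachable if every $x\in X_0$ is $\xi(0)$ for some $(\mu,\nu,\xi)\in\mathcal B_f(Q)$ and every $x\in X$ is $\xi(k)$ for some such trajectory and some $k$. Standing assumptions: $Q=(X,U,Y,\delta,X_0)$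 is live and reachable and satisfies $(x,u,y,x')\in\delta\iff(x'\in F_\delta(x,u)\wedge y\in H_\delta(x))$ for all $x,x'\in X,u\in U,y\in Y$; the external signal space $W$ is finite and either $W=U\times Y$ or $W=Y$. The projection $\pi_W(u,y)$ is $(u,y)$ if $W=U\times Y$ and $y$ if $W=Y$ (likewise $\pi_{U\times Y}(u,y)=(u,y)$, $\pi_Y(u,y)=y$). Behaviors: $\mathcal B_S(Q)$ is the set of pairs $(w,\xi)$ of maps on $\mathbb Z$ with $w(k)=\xi(k)=\diamond$ for $k<0$ and $(w(k),\xi(k))=(\pi_W(\mu(k),\nu(k)),\xi'(k))$ for $k\ge0$, for some $(\mu,\nu,\xi')\in\mathcal B_f(Q)$. Corresponding strings: for integers $a,b$ and $x\in X$, $E^{[a,b]}(x)=\{\zeta:\exists(w,\xi)\in\mathcal B_S(Q),k\in\mathbb N_0:\ \xi(k)=x,\ \zeta=w|_{[k+a,k+b]}\}$. For $l,m\in\mathbb N_0$ with $m\le l$, $I^l_m=[m-l,m-1]$. Abstract state machine: $\hat Q^{I^l_m}=(\hat X^{I^l_m},U,Y,\hat\delta^{I^l_m},\hat X^{I^l_m}_0)$ with $\hat X^{I^l_m}=\bigcup_{x\in X}E^{I^l_m}(x)$, $\hat X^{I^l_m}_0=\bigcup_{x\in X_0}E^{I^l_m}(x)$, and $(\hat x,u,y,\hat x')\in\hat\delta^{I^l_m}$ iff (1) $\hat x'|_{[0,l-m-1]}=(\hat x|_{[0,l-m-1]}\cdot\pi_W(u,y))|_{[1,l-m]}$, (2)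 $\hat x|_{[l-m,l-1]}=(\pi_W(u,y)\cdot\hat x'|_{[l-m,l-2]})|_{[0,m-1]}$, and (3) there are $x,x'\in X$ with $\hat x\in E^{I^l_m}(x)$, $\hat x'\in E^{I^l_m}(x')$, $(x,u,y,x')\in\delta$. Simulation relations: for state machines $Q_i=(X_i,U,Y,\delta_i,X_{0,i})$, $i=1,2$, and $V\in\{U\times Y,Y\}$, a relation $\mathcal R\subseteq X_1\times X_2$ is a simulation relation from $Q_1$ to $Q_2$ w.r.t. $V$ if (a) for every $x_1\in X_{0,1}$ there is $x_2\in X_{0,2}$ with $(x_1,x_2)\in\mathcal R$, and (b) for all $(x_1,x_2)\in\mathcal R$ and $(x_1,u_1,y_1,x_1')\in\delta_1$ there exist $u_2,y_2,x_2'$ with $(x_2,u_2,y_2,x_2')\in\delta_2$, $(x_1',x_2')\in\mathcal R$ and $\pi_V(u_1,y_1)=\pi_V(u_2,y_2)$. *)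

(* Defs.v *)
From Stdlib Require Import ZArith List.
Import ListNotations.
Open Scope Z_scope.

(* Choice of the external signal space: W = U x Y or W = Y. *)
Inductive wkind : Type := WUY | WY.

Definition Wt (U Y : Type) (k : wkind) : Type :=
  match k with WUY => (U * Y)%type | WY => Y end.

Definition piW {U Y : Type} (k : wkind) (u : U) (y : Y) : Wt U Y k :=
  match k return Wt U Y k with WUY => (u, y) | WY => y end.

Definition W_finite (U Y : Type) (k : wkind) : Prop :=
  exists l : list (Wt U Y k), forall w, In w l.

(* Symbols: W extended by the diamond symbol, rendered as [option W]
   with [None] = diamond. *)

Definition Hd {X U Y : Type} (delta : X -> U -> Y -> X -> Prop) (x : X) (y : Y) : Prop :=
  exists u x', delta x u y x'.
Definition Fd {X U Y : Type} (delta : X -> U -> Y -> X -> Prop) (x : X) (u : U) (x' : X) : Prop :=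
  exists y, Hd delta x y /\ delta x u y x'.

Definition full_behavior {X U Y : Type} (delta : X -> U -> Y -> X -> Prop) (X0 : X -> Prop)
  (mu : nat -> U) (nu : nat -> Y) (xi : nat -> X) : Prop :=
  X0 (xi 0%nat) /\ forall k : nat, delta (xi k) (mu k) (nu k) (xi (S k)).

Definition live_reachable {X U Y : Type} (delta : X -> U -> Y -> X -> Prop) (X0 : X -> Prop) : Prop :=
  (forall x, X0 x -> exists mu nu xi, full_behavior delta X0 mu nu xi /\ xi 0%nat = x) /\
  (forall x : X, exists mu nu xi (k : nat), full_behavior delta X0 mu nu xi /\ xi k = x).

Definition delta_product {X U Y : Type} (delta : X -> U -> Y -> X -> Prop) : Prop :=
  forall x u y x', delta x u y x' <-> (Fd delta x u x' /\ Hd delta x y).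

Definition BS {X U Y : Type} (k : wkind) (delta : X -> U -> Y -> X -> Prop) (X0 : X -> Prop)
  (w : Z -> option (Wt U Y k)) (xi : Z -> option X) : Prop :=
  exists mu nu xi', full_behavior delta X0 mu nu xi' /\
    forall t : Z,
      (t < 0 -> w t = None /\ xi t = None) /\
      (0 <= t -> w t = Some (piW k (mu (Z.to_nat t)) (nu (Z.to_nat t)))
                 /\ xi t = Some (xi' (Z.to_nat t))).

(* w|_[t1,t2] for a map on Z (empty if t2 < t1) *)
Definition restrictZ {A : Type} (w : Z -> A) (t1 t2 : Z) : list A :=
  map (fun i : nat => w (t1 + Z.of_nat i)) (seq 0 (Z.to_nat (t2 - t1 + 1))).

(* zeta|_[t1,t2] for a string (indices 0-based; empty if t2 < t1) *)
Definition restrictS {A : Type} (s : list A) (t1 t2 : Z) : list A :=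
  firstn (Z.to_nat (t2 - t1 + 1)) (skipn (Z.to_nat t1) s).

Definition Estr {X U Y : Type} (k : wkind) (delta : X -> U -> Y -> X -> Prop) (X0 : X -> Prop)
  (a b : Z) (x : X) (zeta : list (option (Wt U Y k))) : Prop :=
  exists w xi, BS k delta X0 w xi /\
    exists n : nat, xi (Z.of_nat n) = Some x /\ zeta = restrictZ w (Z.of_nat n + a) (Z.of_nat n + b).

Definition Ilo (l m : nat) : Z := Z.of_nat m - Z.of_nat l.
Definition Ihi (l m : nat) : Z := Z.of_nat m - 1.

Definition Xhat {X U Y : Type} (k : wkind) (delta : X -> U -> Y -> X -> Prop) (X0 : X -> Prop)
  (l m : nat) (xh : list (option (Wt U Y k))) : Prop :=
  exists x : X, Estr k delta X0 (Ilo l m) (Ihi l m) x xh.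

Definition Xhat0 {X U Y : Type} (k : wkind) (delta : X -> U -> Y -> X -> Prop) (X0 : X -> Prop)
  (l m : nat) (xh : list (option (Wt U Y k))) : Prop :=
  exists x : X, X0 x /\ Estr k delta X0 (Ilo l m) (Ihi l m) x xh.

Definition deltahat {X U Y : Type} (k : wkind) (delta : X -> U -> Y -> X -> Prop) (X0 : X -> Prop)
  (l m : nat) (xh : list (option (Wt U Y k))) (u : U) (y : Y) (xh' : list (option (Wt U Y k))) : Prop :=
  let L := Z.of_nat l in
  let M := Z.of_nat m in
  let p := Some (piW k u y) in
  (* (1) *)
  restrictS xh' 0 (L - M - 1) = restrictS (restrictS xh 0 (L - M - 1) ++ [p]) 1 (L - M) /\
  (* (2) *)
  restrictS xh (L - M) (L - 1) = restrictS (p :: restrictS xh' (L - M) (L - 2)) 0 (M - 1) /\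
  (* (3) *)
  exists x x', Estr k delta X0 (Ilo l m) (Ihi l m) x xh /\
               Estr k delta X0 (Ilo l m) (Ihi l m) x' xh' /\ delta x u y x'.

Definition is_simulation {X1 X2 U Y : Type} (vk : wkind)
  (S1 : X1 -> Prop) (I1 : X1 -> Prop) (d1 : X1 -> U -> Y -> X1 -> Prop)
  (S2 : X2 -> Prop) (I2 : X2 -> Prop) (d2 : X2 -> U -> Y -> X2 -> Prop)
  (R : X1 -> X2 -> Prop) : Prop :=
  (forall x1 x2, R x1 x2 -> S1 x1 /\ S2 x2) /\
  (forall x1, I1 x1 -> exists x2, I2 x2 /\ R x1 x2) /\
  (forall x1 x2 u1 y1 x1', R x1 x2 -> d1 x1 u1 y1 x1' ->
     exists u2 y2 x2', d2 x2 u2 y2 x2' /\ R x1' x2' /\ piW vk u1 y1 = piW vk u2 y2).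

(* Main.v *)
Require Import Defs.
From Stdlib Require Import ZArith List Lia.
Import ListNotations.
Open Scope Z_scope.

Definition listw {A : Type} (w : Z -> A) (a : Z) (l : nat) : list A :=
  map (fun i : nat => w (a + Z.of_nat i)) (seq 0 l).

Lemma listw_ext {A : Type} (w w' : Z -> A) a l :
  (forall t, a <= t < a + Z.of_nat l -> w t = w' t) -> listw w a l = listw w' a l.
Proof.
  intros H. unfold listw. apply map_ext_in. intros i Hi.
  apply in_seq in Hi. apply H. lia.
Qed.

Lemma listw_len {A : Type} (w : Z -> A) a l : length (listw w a l) = l.
Proof. unfold listw. now rewrite length_map, length_seq. Qed.

Lemma listw_shift {A : Type} (w : Z -> A) a l :
  firstn l (skipn 1 (listw w a l ++ [w (a + Z.of_nat l)])) = listw w (a + 1) l.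
Proof.
  assert (E : listw w a l ++ [w (a + Z.of_nat l)] = w a :: listw w (a+1) l).
  { unfold listw. transitivity (map (fun i : nat => w (a + Z.of_nat i)) (seq 0 (S l))).
    - rewrite seq_S, map_app. reflexivity.
    - simpl. f_equal; [f_equal; lia|].
      rewrite <- seq_shift, map_map. apply map_ext. intros i. f_equal. lia. }
  rewrite E. simpl skipn. apply firstn_all2. rewrite listw_len. lia.
Qed.

Definition wfun {U Y : Type} (k : wkind) (mu : nat -> U) (nu : nat -> Y) (t : Z)
  : option (Wt U Y k) :=
  if Z.ltb t 0 then None else Some (piW k (mu (Z.to_nat t)) (nu (Z.to_nat t))).
Definition xifun {X : Type} (xs : nat -> X) (t : Z) : option X :=
  if Z.ltb t 0 then None else Some (xs (Z.to_nat t)).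

Lemma BS_wfun {X U Y : Type} k (delta : X -> U -> Y -> X -> Prop) X0 mu nu xs :
  full_behavior delta X0 mu nu xs -> BS k delta X0 (wfun k mu nu) (xifun xs).
Proof.
  intros H. exists mu, nu, xs. split; auto. intros t; unfold wfun, xifun.
  split; intros Ht.
  - rewrite (proj2 (Z.ltb_lt t 0) Ht). auto.
  - rewrite (proj2 (Z.ltb_ge t 0) Ht). auto.
Qed.

Theorem mainTheorem4 (X U Y : Type) (delta : X -> U -> Y -> X -> Prop) (X0 : X -> Prop)
  (k : wkind)
  (Hlr : live_reachable delta X0)
  (Hprod : delta_product delta)
  (Hfin : W_finite U Y k)
  (l : nat) :
  exists R : X -> list (option (Wt U Y k)) -> Prop,
    is_simulation WUY
      (fun _ : X => True) X0 delta
      (Xhat k delta X0 l 0) (Xhat0 k delta X0 l 0) (deltahat k delta X0 l 0)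
      R.
Proof.
  destruct Hlr as [Hlive Hreach].
  exists (fun x xh => Estr k delta X0 (Ilo l 0) (Ihi l 0) x xh).
  split; [|split].
  - intros x xh H. split; [exact I| exists x; exact H].
  - intros x0 Hx0. destruct (Hlive x0 Hx0) as (mu & nu & xs & Hfb & Hx).
    exists (restrictZ (wfun k mu nu) (Z.of_nat 0 + Ilo l 0) (Z.of_nat 0 + Ihi l 0)).
    assert (HE : Estr k delta X0 (Ilo l 0) (Ihi l 0) x0
       (restrictZ (wfun k mu nu) (Z.of_nat 0 + Ilo l 0) (Z.of_nat 0 + Ihi l 0))).
    { exists (wfun k mu nu), (xifun xs). split. apply BS_wfun; auto.
      exists 0%nat. split; auto. unfold xifun. simpl. now rewrite Hx. }
    split; auto. exists x0; auto.
  - intros x xh u y x' HR Hd.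
    exists u, y.
    destruct HR as (w & xi & (mu & nu & xs & Hfb & Hw) & n & Hxn & Hxh).
    destruct (Hreach x') as (mu2 & nu2 & xs2 & j & Hfb2 & Hj).
    assert (Hxsn : xs n = x).
    { destruct (Hw (Z.of_nat n)) as [_ H2]. destruct (H2 ltac:(lia)) as [_ H3].
      rewrite Nat2Z.id in H3. congruence. }
    set (mu' := fun i => if Nat.ltb i n then mu i else if Nat.eqb i n then u
                         else mu2 (i - S n + j)%nat).
    set (nu' := fun i => if Nat.ltb i n then nu i else if Nat.eqb i n then y
                         else nu2 (i - S n + j)%nat).
    set (xs' := fun i => if Nat.leb i n then xs i else xs2 (i - S n + j)%nat).
    assert (Hfb' : full_behavior delta X0 mu' nu' xs').
    { split.
      - unfold xs'. simpl. apply Hfb.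
      - intros i. unfold mu', nu', xs'.
        destruct (Nat.ltb_spec i n).
        + rewrite (proj2 (Nat.leb_le i n) ltac:(lia)).
          rewrite (proj2 (Nat.leb_le (S i) n) ltac:(lia)). apply Hfb.
        + destruct (Nat.eqb_spec i n).
          * subst i. rewrite Nat.leb_refl.
            rewrite (proj2 (Nat.leb_gt (S n) n) ltac:(lia)).
            rewrite Nat.sub_diag. simpl. rewrite Hxsn, Hj. exact Hd.
          * rewrite (proj2 (Nat.leb_gt i n) ltac:(lia)).
            rewrite (proj2 (Nat.leb_gt (S i) n) ltac:(lia)).
            replace (S i - S n + j)%nat with (S (i - S n + j)) by lia.
            apply Hfb2. }
    set (w' := wfun k mu' nu').
    assert (Hagree : forall t, t < Z.of_nat n -> w t = w' t).
    { intros t Ht. destruct (Hw t) as [H1 H2]. unfold w', wfun.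
      destruct (Z.ltb_spec t 0).
      - now destruct (H1 H).
      - destruct (H2 H) as [H3 _]. rewrite H3. unfold mu', nu'.
        rewrite (proj2 (Nat.ltb_lt (Z.to_nat t) n) ltac:(lia)). reflexivity. }
    assert (Hwn : w' (Z.of_nat n) = Some (piW k u y)).
    { unfold w', wfun. rewrite (proj2 (Z.ltb_ge (Z.of_nat n) 0) ltac:(lia)).
      rewrite Nat2Z.id. unfold mu', nu'. rewrite Nat.ltb_irrefl, Nat.eqb_refl. reflexivity. }
    assert (Hxh2 : xh = listw w' (Z.of_nat n - Z.of_nat l) l).
    { rewrite Hxh. unfold restrictZ. fold (listw w (Z.of_nat n + Ilo l 0)
         (Z.to_nat (Z.of_nat n + Ihi l 0 - (Z.of_nat n + Ilo l 0) + 1))).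
      unfold Ilo, Ihi.
      replace (Z.to_nat _) with l by lia.
      replace (Z.of_nat n + (Z.of_nat 0 - Z.of_nat l)) with (Z.of_nat n - Z.of_nat l) by lia.
      apply listw_ext. intros t Ht. apply Hagree. lia. }
    set (xh' := listw w' (Z.of_nat n - Z.of_nat l + 1) l).
    assert (HE' : Estr k delta X0 (Ilo l 0) (Ihi l 0) x' xh').
    { exists w', (xifun xs'). split. apply BS_wfun; auto.
      exists (S n). split.
      - unfold xifun. rewrite (proj2 (Z.ltb_ge (Z.of_nat (S n)) 0) ltac:(lia)).
        rewrite Nat2Z.id. unfold xs'. rewrite (proj2 (Nat.leb_gt (S n) n) ltac:(lia)).
        rewrite Nat.sub_diag. simpl. now rewrite Hj.
      - unfold xh', restrictZ. fold (listw w' (Z.of_nat (S n) + Ilo l 0)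
          (Z.to_nat (Z.of_nat (S n) + Ihi l 0 - (Z.of_nat (S n) + Ilo l 0) + 1))).
        unfold Ilo, Ihi.
        replace (Z.to_nat _) with l by lia. f_equal. lia. }
    assert (HE : Estr k delta X0 (Ilo l 0) (Ihi l 0) x xh).
    { exists w, xi. split. exists mu, nu, xs. split; auto. exists n. auto. }
    exists xh'. split; [|split; auto].
    unfold deltahat. split; [|split].
    + unfold restrictS.
      replace (Z.to_nat (Z.of_nat l - Z.of_nat 0 - 1 - 0 + 1)) with l by lia.
      replace (Z.to_nat (Z.of_nat l - Z.of_nat 0 - 1 + 1)) with l by lia.
      replace (Z.to_nat 0) with 0%nat by lia. replace (Z.to_nat 1) with 1%nat by lia.
      rewrite Hxh2. unfold xh'. rewrite <- Hwn.
      change (skipn 0 ?z) with z.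
      rewrite (firstn_all2 (n:=l) (listw w' (Z.of_nat n - Z.of_nat l) l))
        by (rewrite listw_len; lia).
      rewrite (firstn_all2 (n:=l) (listw w' (Z.of_nat n - Z.of_nat l + 1) l))
        by (rewrite listw_len; lia).
      assert (Ea : Z.of_nat n = (Z.of_nat n - Z.of_nat l) + Z.of_nat l) by lia.
      pose proof (listw_shift w' (Z.of_nat n - Z.of_nat l) l) as HS.
      rewrite <- Ea in HS. symmetry. exact HS.
    + unfold restrictS.
      replace (Z.to_nat (Z.of_nat l - 1 - (Z.of_nat l - Z.of_nat 0) + 1)) with 0%nat by lia.
      replace (Z.to_nat (Z.of_nat 0 - 1 - 0 + 1)) with 0%nat by lia.
      reflexivity.
    + exists x, x'. auto.
Qed.
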